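(* Let $G=(g_{ij})$ be a Hermitian $4\times4$ matrix with $g_{ii}=0$, $g_{12}=g_{23}=g_{34}=1$, $|g_{13}|=1$, $g_{14}\ne0$, $g_{24}\ne0$. Then $G$ is the normalized Gram matrix of some ordered quadruple of distinct points of $\partial\mathbf H^2_{\mathbb C}$ if and only if $\mathrm{Re}(g_{13})\le0$, $\mathrm{Re}(g_{24}\overline{g}_{14})\le0$ and $\det G=0$.
   Context: $\mathbb C^{2,1}$ is $\mathbb C^3$ with the Hermitian form $\langle Z,W\rangle=z_1\overline{w}_3+z_2\overline{w}_2+z_3\overline{w}_1$; $\partial\mathbf H^2_{\mathbb C}$ is the set of null lines in $\mathbb P\mathbb C^2$. For a quadruple of boundary points with null lifts $P_i$, a Gram matrix is $(\langle P_i,P_j\rangle)$; the normalized Gram matrix is the unique Gram matrix (for suitable lifts) with $g_{ii}=0$, $g_{12}=g_{23}=g_{34}=1$, $|g_{13}|=1$. *)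

(* Defs.v *)
From HB Require Import structures.
From mathcomp Require Import all_boot all_order all_algebra.
From mathcomp Require Import reals complex.
Set Implicit Arguments. Unset Strict Implicit. Unset Printing Implicit Defensive.
Import Order.TTheory GRing.Theory Num.Theory.
Local Open Scope ring_scope.

Section Defs.
Variable C : numClosedFieldType.

(* Hermitian form on C^{2,1}: <Z,W> = z1 conj(w3) + z2 conj(w2) + z3 conj(w1). *)
Definition i3_0 : 'I_3 := @Ordinal 3 0 isT.
Definition i3_1 : 'I_3 := @Ordinal 3 1 isT.
Definition i3_2 : 'I_3 := @Ordinal 3 2 isT.

Definition hform (Z W : 'cV[C]_3) : C :=
  Z i3_0 0 * (W i3_2 0)^* + Z i3_1 0 * (W i3_1 0)^* + Z i3_2 0 * (W i3_0 0)^*.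

(* A null vector: a nonzero lift of a point of the boundary of H^2_C. *)
Definition null_vec (Z : 'cV[C]_3) : Prop := Z != 0 /\ hform Z Z = 0.

Definition same_point (Z W : 'cV[C]_3) : Prop := exists c : C, W = c *: Z.

Definition gram_of_distinct_boundary_quadruple (G : 'M[C]_4) : Prop :=
  exists P : 'I_4 -> 'cV[C]_3,
    (forall i, null_vec (P i)) /\
    (forall i j, i != j -> ~ same_point (P i) (P j)) /\
    (forall i j, G i j = hform (P i) (P j)).

Definition hermitian_mx (G : 'M[C]_4) : Prop := forall i j, G j i = (G i j)^*.
End Defs.

(* 1-based paper indices 1..4 correspond to ordinals 0..3 *)
Definition g1 : 'I_4 := @Ordinal 4 0 isT.
Definition g2 : 'I_4 := @Ordinal 4 1 isT.
Definition g3 : 'I_4 := @Ordinal 4 2 isT.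
Definition g4 : 'I_4 := @Ordinal 4 3 isT.

(* Main.v *)
Require Import Defs.
From HB Require Import structures.
From mathcomp Require Import all_boot all_order all_algebra.
From mathcomp Require Import reals complex.
From mathcomp Require Import ring.
Import Order.TTheory GRing.Theory Num.Theory.
Local Open Scope ring_scope.
Set Implicit Arguments. Unset Strict Implicit.

Definition Gm (C : numClosedFieldType) (a p q : C) : 'M[C]_4 :=
  \matrix_(i < 4, j < 4) nth 0 (nth [::] [:: [:: 0; 1; a; p]; [:: 1; 0; 1; q];
       [:: a^*; 1; 0; 1]; [:: p^*; q^*; 1; 0]] i) j.

Lemma detGm (C : numClosedFieldType) (a p q : C) :
  \det (Gm a p q) = (1 - p - a^* * q) * (1 - p - a^* * q)^*
     - (a + a^*) * (q * p^* + q^* * p).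
Proof.
rewrite (expand_det_row _ ord0) !big_ord_recl big_ord0 /cofactor.
rewrite !(expand_det_row _ ord0) !big_ord_recl !big_ord0 /cofactor.
rewrite !(expand_det_row _ ord0) !big_ord_recl !big_ord0 /cofactor.
rewrite !det_mx11 !mxE /=.
rewrite !rmorphB !rmorphM /= !rmorph1 conjCK.
ring.
Qed.

Lemma exists_yb (C : numClosedFieldType) (s t w : C) :
  s <= 0 -> t <= 0 -> w * w^* = s * t ->
  exists y b : C, [/\ y * y^* = - s, y * b^* = w & b * b^* = - t].
Proof.
move=> hs ht hw.
have ys : 0 <= sqrtC (- s) by rewrite sqrtC_ge0 oppr_ge0.
have yc : (sqrtC (- s))^* = sqrtC (-s) by rewrite geC0_conj.
have yy : sqrtC (- s) * (sqrtC (- s))^* = - s by rewrite yc -expr2 sqrtCK.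
have [y0|ny0] := eqVneq (sqrtC (- s)) 0.
  have s0 : s = 0 by apply/eqP; rewrite -oppr_eq0 -sqrtC_eq0 y0.
  have : w * w^* == 0 by rewrite hw s0 mul0r.
  rewrite mulf_eq0 conjC_eq0 orbb => /eqP w0.
  have bs : 0 <= sqrtC (- t) by rewrite sqrtC_ge0 oppr_ge0.
  exists (sqrtC (- s)), (sqrtC (-t)); split => //.
    by rewrite y0 mul0r w0.
  by rewrite geC0_conj // -expr2 sqrtCK.
have yi : 0 <= (sqrtC (- s))^-1 by rewrite invr_ge0.
exists (sqrtC (- s)), (w^* / sqrtC (- s)); split => //.
  by rewrite rmorphM /= conjCK (geC0_conj yi) mulrC divfK.
have sn0 : s != 0 by apply: contraNneq ny0 => ->; rewrite oppr0 sqrtC0.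
rewrite rmorphM /= conjCK (geC0_conj yi).
have -> : w^* / sqrtC (- s) * (w / sqrtC (- s)) = (w * w^*) / (sqrtC (-s) ^+ 2).
  by field.
by rewrite sqrtCK hw; field.
Qed.

Lemma gram3 (C : numClosedFieldType) (X Y Z : 'cV[C]_3) :
  hform X X = 0 -> hform Y Y = 0 -> hform Z Z = 0 ->
  hform X Y * hform Y Z * hform Z X + hform X Z * hform Y X * hform Z Y <= 0.
Proof.
move=> hX hY hZ.
pose d := X i3_0 0 * (Y i3_1 0 * Z i3_2 0 - Y i3_2 0 * Z i3_1 0)
  - X i3_1 0 * (Y i3_0 0 * Z i3_2 0 - Y i3_2 0 * Z i3_0 0)
  + X i3_2 0 * (Y i3_0 0 * Z i3_1 0 - Y i3_1 0 * Z i3_0 0).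
have E : hform X X * (hform Y Y * hform Z Z - hform Y Z * hform Z Y)
  - hform X Y * (hform Y X * hform Z Z - hform Y Z * hform Z X)
  + hform X Z * (hform Y X * hform Z Y - hform Y Y * hform Z X) = - (d * d^*).
  rewrite /d /hform !(rmorphD, rmorphB, rmorphM) /=; ring.
move: E; rewrite hX hY hZ => E.
have -> : hform X Y * hform Y Z * hform Z X + hform X Z * hform Y X * hform Z Y
  = - (d * d^*) by rewrite -E; ring.
by rewrite oppr_le0 mul_conjC_ge0.
Qed.

Lemma sum3 (C : numClosedFieldType) (f : 'I_3 -> C) :
  \sum_(k < 3) f k = f i3_0 + f i3_1 + f i3_2.
Proof.
rewrite !big_ord_recl big_ord0 addr0 addrA.
by congr (f _ + f _ + f _); apply: val_inj.
Qed.

Lemma ord4P (i : 'I_4) : i = g1 \/ i = g2 \/ i = g3 \/ i = g4.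
Proof.
case: i => [[|[|[|[|n]]]] H].
- by left; apply: val_inj.
- by right; left; apply: val_inj.
- by right; right; left; apply: val_inj.
- by right; right; right; apply: val_inj.
- by [].
Qed.

Lemma hformZ (C : numClosedFieldType) (Z : 'cV[C]_3) c :
  hform Z (c *: Z) = c^* * hform Z Z.
Proof. rewrite /hform !mxE !rmorphM /=; ring. Qed.

Definition mkv (C : numClosedFieldType) (x y z : C) : 'cV[C]_3 :=
  \col_(k < 3) nth 0 [:: x; y; z] k.

Theorem proposition3p1 (R : realType) (G : 'M[R[i]]_4) :
  hermitian_mx G ->
  (forall k, G k k = 0) ->
  G g1 g2 = 1 -> G g2 g3 = 1 -> G g3 g4 = 1 ->
  `|G g1 g3| = 1 ->
  G g1 g4 != 0 -> G g2 g4 != 0 ->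
  (gram_of_distinct_boundary_quadruple G <->
   ('Re (G g1 g3) <= 0 /\ 'Re (G g2 g4 * (G g1 g4)^*) <= 0 /\ \det G = 0)).
Proof.
move=> hH hD h12 h23 h34 h13 h14 h24.
set a := G g1 g3 in h13 *; set p := G g1 g4 in h14 *; set q := G g2 g4 in h24 *.
have GE : G = Gm a p q.
  apply/matrixP => i j; rewrite mxE.
  have c1 : (1 : R[i])^* = 1 by rewrite rmorph1.
  have [->|[->|[->|->]]] := ord4P i; have [->|[->|[->|->]]] := ord4P j => /=;
    rewrite ?hD ?h12 ?h23 ?h34 //;
    rewrite ?(hH g1 g2) ?(hH g2 g3) ?(hH g3 g4) ?(hH g1 g3) ?(hH g1 g4) ?(hH g2 g4)
      ?h12 ?h23 ?h34 ?c1 //.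
split.
- case=> P [hnull [_ hP]].
  have n0 i : hform (P i) (P i) = 0 by case: (hnull i).
  split; [|split].
  + have := gram3 (n0 g1) (n0 g2) (n0 g3).
    rewrite -!hP GE !mxE /= !mul1r !mulr1 => hle.
    by rewrite ReE mulr_le0_ge0 // ?invr_ge0 ?ler0n // addrC.
  + have := gram3 (n0 g1) (n0 g2) (n0 g4).
    rewrite -!hP GE !mxE /= !mul1r !mulr1 => hle.
    rewrite ReE mulr_le0_ge0 // ?invr_ge0 ?ler0n //.
    by rewrite rmorphM /= conjCK [q^* * p]mulrC.
  + pose A : 'M[R[i]]_(4, 3) := \matrix_(i, k) P i k 0.
    pose B : 'M[R[i]]_(3, 4) := \matrix_(k, j) (P j (rev_ord k) 0)^*.
    have -> : G = A *m B.
      apply/matrixP => i j; rewrite hP !mxE sum3 !mxE /hform.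
      have -> : rev_ord i3_0 = i3_2 by apply: val_inj.
      have -> : rev_ord i3_1 = i3_1 by apply: val_inj.
      by have -> : rev_ord i3_2 = i3_0 by apply: val_inj.
    apply/eqP; rewrite -[_ == 0]negbK -unitfE -unitmxE -row_free_unit.
    apply/negP => /eqP hr.
    have := leq_trans (mxrankM_maxl A B) (rank_leq_col A).
    by rewrite hr.
- case=> hRa [hRqp hdet].
  move: hdet; rewrite GE detGm => /eqP; rewrite subr_eq0 => /eqP hw.
  have hs : a + a^* <= 0.
    move: hRa; rewrite ReE pmulr_lle0 //; by rewrite invr_gt0 ltr0n.
  have ht : q * p^* + q^* * p <= 0.
    move: hRqp; rewrite ReE pmulr_lle0 ?invr_gt0 ?ltr0n //.
    by rewrite rmorphM /= conjCK.
  have [y [b [Hyy Hw Hbb]]] := exists_yb hs ht hw.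
  have Hw' : b * y^* = 1 - p^* - a * q^*.
    by rewrite -[b]conjCK -rmorphM /= mulrC Hw !(rmorphB, rmorphM) /= conjCK rmorph1.
  pose P0 : 'cV[R[i]]_3 := mkv 1 0 0.
  pose P1 : 'cV[R[i]]_3 := mkv 0 0 1.
  pose P2 : 'cV[R[i]]_3 := mkv 1 y a^*.
  pose P3 : 'cV[R[i]]_3 := mkv q^* b p^*.
  pose P (i : 'I_4) := nth 0 [:: P0; P1; P2; P3] i.
  have HE i j : G i j = hform (P i) (P j).
    rewrite GE !mxE.
    have [->|[->|[->|->]]] := ord4P i; have [->|[->|[->|->]]] := ord4P j;
      rewrite /= /P0 /P1 /P2 /P3 /hform !mxE /= ?conjCK ?rmorph0 ?rmorph1
        ?Hw ?Hw' ?Hyy ?Hbb; ring.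
  have Gnz i j : i != j -> G i j != 0.
    have c1 : (1 : R[i])^* = 1 by rewrite rmorph1.
    have a0 : a != 0 by rewrite -normr_eq0 h13 oner_eq0.
    have [->|[->|[->|->]]] := ord4P i; have [->|[->|[->|->]]] := ord4P j => //= _;
      rewrite ?h12 ?h23 ?h34 ?oner_eq0 //;
      rewrite ?(hH g1 g2) ?(hH g2 g3) ?(hH g3 g4) ?(hH g1 g3) ?(hH g1 g4) ?(hH g2 g4)
      ?h12 ?h23 ?h34 ?c1 ?oner_eq0 ?conjC_eq0 //.
  exists P; split; [|split] => //.
  + move=> i; split; last by rewrite -HE hD.
    have [->|[->|[->|->]]] := ord4P i; apply/eqP => /matrixP;
      [move/(_ i3_0 0)|move/(_ i3_2 0)|move/(_ i3_0 0)|move/(_ i3_0 0)];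
      rewrite /= /P0 /P1 /P2 /P3 !mxE /=.
    * by move/eqP; rewrite oner_eq0.
    * by move/eqP; rewrite oner_eq0.
    * by move/eqP; rewrite oner_eq0.
    * by move/eqP; rewrite conjC_eq0 (negPf h24).
  + move=> i j ij [c hc].
    by move: (Gnz i j ij); rewrite HE hc hformZ -HE hD mulr0 eqxx.
  + by move=> i j; rewrite -GE HE.
Qed.
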